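(* Let $q>0$. Then the function $\mathcal{E}_q^z$ is analytic in the disc $|z|<R_q$, where $$R_q=\begin{cases}\dfrac{2}{1-q}, & 0<q<1,\\[1ex] \dfrac{2q}{q-1}, & q>1,\\[1ex] \infty, & q=1,\end{cases}$$ and for $|z|<R_q$ $$\mathcal{E}_q^z=\sum_{n=0}^\infty \frac{z^n}{\{n\}!},$$ where, for $q\neq1$, $\{n\}:=\dfrac{1+q+\dots+q^{n-1}}{\frac12(1+q^{n-1})}=\dfrac{2(1-q^n)}{(1-q)(1+q^{n-1})}$ (and $\{n\}:=n$ for $q=1$), and $\{n\}!:=\{1\}\{2\}\cdots\{n\}$, $\{0\}!:=1$.
   Context: For $q>0$ and integers $k\ge1$ let $[k]=1+q+\dots+q^{k-1}$, $[n]!=[1][2]\cdots[n]$, $[0]!=1$. The standard $q$-exponentials are $e_q^z=\sum_{n\ge0} z^n/[n]!$ and $E_q^z=\sum_{n\ge0} q^{n(n-1)/2}z^n/[n]!$, defined by these power series on their discs of convergence and extended meromorphically to $\mathbb{C}$; for $0<q<1$ one has $e_q^z=\prod_{k\ge0}(1-(1-q)q^kz)^{-1}$ and $E_q^z=\prod_{k\ge0}(1+(1-q)q^kz)$, and in general $E_q^z=e_{1/q}^z$; for $q=1$ both equal $e^z$. The improved $q$-exponential is $\mathcal{E}_q^z:=e_q^{z/2}E_q^{z/2}$ (a meromorphic function of $z$); for $0<q<1$, $\mathcal{E}_q^z=\prod_{k\ge0}\frac{1+q^k(1-q)\frac z2}{1-q^k(1-q)\frac z2}$. *)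

(* Defs.v *)
From Stdlib Require Import Reals Lra Lia.
Open Scope R_scope.

Definition Cx : Type := (R * R)%type.
Definition C0 : Cx := (0, 0).
Definition C1 : Cx := (1, 0).
Definition Cadd (z w : Cx) : Cx := (fst z + fst w, snd z + snd w).
Definition Copp (z : Cx) : Cx := (- fst z, - snd z).
Definition Csub (z w : Cx) : Cx := Cadd z (Copp w).
Definition Cmul (z w : Cx) : Cx :=
  (fst z * fst w - snd z * snd w, fst z * snd w + snd z * fst w).
Definition Cscal (r : R) (z : Cx) : Cx := (r * fst z, r * snd z).
Fixpoint Cpow (z : Cx) (n : nat) : Cx :=
  match n with O => C1 | S m => Cmul z (Cpow z m) end.
Definition Cnorm (z : Cx) : R := sqrt (fst z ^ 2 + snd z ^ 2).

Fixpoint Csum (f : nat -> Cx) (n : nat) : Cx :=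
  match n with O => C0 | S m => Cadd (Csum f m) (f m) end.

Definition Cseries (f : nat -> Cx) (l : Cx) : Prop :=
  forall eps : R, 0 < eps ->
    exists N : nat, forall n : nat, (N <= n)%nat -> Cnorm (Csub (Csum f n) l) < eps.

Fixpoint qint (q : R) (k : nat) : R :=
  match k with O => 0 | S m => qint q m + q ^ m end.

Fixpoint qfact (q : R) (n : nat) : R :=
  match n with O => 1 | S m => qfact q m * qint q (S m) end.

(* {n} = [n] / ((1 + q^(n-1))/2)   (equals n when q = 1) *)
Definition qbrace (q : R) (n : nat) : R :=
  qint q n / ((1 + q ^ (n - 1)) / 2).

Fixpoint qbfact (q : R) (n : nat) : R :=
  match n with O => 1 | S m => qbfact q m * qbrace q (S m) end.

Definition e_q_term (q : R) (w : Cx) (n : nat) : Cx :=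
  Cscal (/ qfact q n) (Cpow w n).
Definition E_q_term (q : R) (w : Cx) (n : nat) : Cx :=
  Cscal (q ^ (n * (n - 1) / 2) / qfact q n) (Cpow w n).
Definition Eimp_term (q : R) (z : Cx) (n : nat) : Cx :=
  Cscal (/ qbfact q n) (Cpow z n).

Definition in_disc (q r : R) : Prop :=
  if Rlt_dec q 1 then r < 2 / (1 - q)
  else if Rlt_dec 1 q then r < 2 * q / (q - 1)
  else True.

(* Main.v *)
Require Import Defs.
From Stdlib Require Import Reals Lra Lia Psatz.
Open Scope R_scope.

Fixpoint rs (f : nat -> R) (n : nat) : R :=
  match n with O => 0 | S m => rs f m + f m end.

Lemma Cx_eq (z w : Cx) : fst z = fst w -> snd z = snd w -> z = w.
Proof. destruct z, w; simpl; intros; subst; reflexivity. Qed.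

Definition N1 (z : Cx) : R := Rabs (fst z) + Rabs (snd z).

Lemma N1_pos z : 0 <= N1 z.
Proof. unfold N1; pose proof (Rabs_pos (fst z)); pose proof (Rabs_pos (snd z)); lra. Qed.

Lemma N1_add z w : N1 (Cadd z w) <= N1 z + N1 w.
Proof. unfold N1, Cadd; simpl.
 pose proof (Rabs_triang (fst z) (fst w)); pose proof (Rabs_triang (snd z) (snd w)); lra. Qed.

Lemma N1_opp z : N1 (Copp z) = N1 z.
Proof. unfold N1, Copp; simpl; rewrite !Rabs_Ropp; reflexivity. Qed.

Lemma N1_sub z w : N1 (Csub z w) <= N1 z + N1 w.
Proof. unfold Csub; rewrite <- (N1_opp w); apply N1_add. Qed.

Lemma N1_mul z w : N1 (Cmul z w) <= N1 z * N1 w.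
Proof. unfold N1, Cmul; destruct z as [a b], w as [c d]; simpl.
 unfold Rminus.
 pose proof (Rabs_triang (a*c) (- (b*d))); pose proof (Rabs_triang (a*d) (b*c)).
 rewrite Rabs_Ropp in H. rewrite !Rabs_mult in H, H0.
 pose proof (Rabs_pos a); pose proof (Rabs_pos b); pose proof (Rabs_pos c); pose proof (Rabs_pos d).
 nra. Qed.

Lemma N1_scal r z : N1 (Cscal r z) = Rabs r * N1 z.
Proof. unfold N1, Cscal; simpl; rewrite !Rabs_mult; ring. Qed.

Lemma Cnorm_le_N1 z : Cnorm z <= N1 z.
Proof. unfold Cnorm, N1.
 pose proof (Rabs_pos (fst z)); pose proof (Rabs_pos (snd z)).
 rewrite <- (sqrt_Rsqr (Rabs (fst z) + Rabs (snd z))) by lra.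
 apply sqrt_le_1_alt. unfold Rsqr.
 replace (fst z ^2) with (Rabs (fst z) * Rabs (fst z)).
 replace (snd z ^2) with (Rabs (snd z) * Rabs (snd z)). nra.
 rewrite <- Rabs_mult, Rabs_right; [ring| nra].
 rewrite <- Rabs_mult, Rabs_right; [ring| nra].
Qed.

Lemma abs_le_Cnorm1 z : Rabs (fst z) <= Cnorm z.
Proof. unfold Cnorm. rewrite <- sqrt_Rsqr_abs. apply sqrt_le_1_alt. unfold Rsqr.
 pose proof (pow2_ge_0 (snd z)). nra. Qed.
Lemma abs_le_Cnorm2 z : Rabs (snd z) <= Cnorm z.
Proof. unfold Cnorm. rewrite <- sqrt_Rsqr_abs. apply sqrt_le_1_alt. unfold Rsqr.
 pose proof (pow2_ge_0 (fst z)). nra. Qed.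
Lemma N1_le_Cnorm z : N1 z <= 2 * Cnorm z.
Proof. unfold N1; pose proof (abs_le_Cnorm1 z); pose proof (abs_le_Cnorm2 z); lra. Qed.

Lemma Cnorm_mul z w : Cnorm (Cmul z w) = Cnorm z * Cnorm w.
Proof. unfold Cnorm, Cmul; simpl. rewrite <- sqrt_mult.
 f_equal; ring. nra. nra. Qed.

Lemma Cnorm_pos z : 0 <= Cnorm z.
Proof. apply sqrt_pos. Qed.

Lemma Cnorm_pow z n : Cnorm (Cpow z n) = Cnorm z ^ n.
Proof. induction n; simpl.
 - unfold Cnorm, C1; simpl. replace (1*(1*1)+0*(0*1)) with 1 by ring. apply sqrt_1.
 - rewrite Cnorm_mul, IHn; reflexivity. Qed.

Lemma Cnorm_scal r z : Cnorm (Cscal r z) = Rabs r * Cnorm z.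
Proof. unfold Cnorm, Cscal; simpl. rewrite <- sqrt_Rsqr_abs, <- sqrt_mult.
 f_equal; unfold Rsqr; ring. apply Rle_0_sqr. nra. Qed.

Lemma rs_ext f g n : (forall i, (i < n)%nat -> f i = g i) -> rs f n = rs g n.
Proof. induction n; simpl; intros; auto. rewrite IHn, H; auto. Qed.

Lemma rs_le f g n : (forall i, (i < n)%nat -> f i <= g i) -> rs f n <= rs g n.
Proof. induction n; simpl; intros. lra. pose proof (H n (Nat.lt_succ_diag_r n)).
 assert (rs f n <= rs g n) by (apply IHn; intros; apply H; lia). lra. Qed.

Lemma rs_nonneg f n : (forall i, 0 <= f i) -> 0 <= rs f n.
Proof. intros; induction n; simpl. lra. pose proof (H n); lra. Qed.

Lemma rs_split f m k : rs f (m + k) = rs f m + rs (fun i => f (m + i)%nat) k.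
Proof. induction k; simpl. rewrite Nat.add_0_r; ring. rewrite Nat.add_succ_r; simpl. rewrite IHk; ring. Qed.

Lemma rs_shift f n : rs f (S n) = f 0%nat + rs (fun k => f (S k)) n.
Proof. induction n. simpl; ring. remember (S n) as m; simpl. rewrite IHn; subst; simpl; ring. Qed.

Lemma rs_scal c f n : rs (fun i => c * f i) n = c * rs f n.
Proof. induction n; simpl. ring. rewrite IHn; ring. Qed.

Lemma rs_plus f g n : rs (fun i => f i + g i) n = rs f n + rs g n.
Proof. induction n; simpl. ring. rewrite IHn; ring. Qed.

Lemma rs_mono f m n : (forall i, 0 <= f i) -> (m <= n)%nat -> rs f m <= rs f n.
Proof. intros. replace n with (m + (n - m))%nat by lia. rewrite rs_split.
 pose proof (rs_nonneg (fun i => f (m+i)%nat) (n-m) (fun i => H _)). lra. Qed.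

Lemma Csum_fst f n : fst (Csum f n) = rs (fun i => fst (f i)) n.
Proof. induction n; simpl; auto. rewrite IHn; auto. Qed.
Lemma Csum_snd f n : snd (Csum f n) = rs (fun i => snd (f i)) n.
Proof. induction n; simpl; auto. rewrite IHn; auto. Qed.

Lemma N1_Csum f n : N1 (Csum f n) <= rs (fun i => N1 (f i)) n.
Proof. induction n; simpl. unfold N1, C0; simpl; rewrite Rabs_R0; lra.
 pose proof (N1_add (Csum f n) (f n)); lra. Qed.

Lemma Csum_ext f g n : (forall i, (i < n)%nat -> f i = g i) -> Csum f n = Csum g n.
Proof. induction n; simpl; intros; auto. rewrite IHn, H; auto. Qed.

Definition CS (f : nat -> Cx) (l : Cx) : Prop :=
  forall eps : R, 0 < eps ->
    exists N : nat, forall n : nat, (N <= n)%nat -> N1 (Csub (Csum f n) l) < eps.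

Lemma CS_Cseries f l : CS f l -> Cseries f l.
Proof. intros H eps He. destruct (H eps He) as [N HN]. exists N; intros.
 pose proof (Cnorm_le_N1 (Csub (Csum f n) l)). specialize (HN n H0). lra. Qed.

Lemma rs_diff_abs u n k :
  Rabs (rs u (n + k) - rs u n) <= rs (fun i => Rabs (u i)) (n + k) - rs (fun i => Rabs (u i)) n.
Proof. induction k. rewrite Nat.add_0_r. unfold Rminus; rewrite !Rplus_opp_r, Rabs_R0; lra.
 rewrite Nat.add_succ_r; simpl.
 replace (rs u (n + k) + u (n + k)%nat - rs u n) with ((rs u (n + k) - rs u n) + u (n+k)%nat) by ring.
 pose proof (Rabs_triang (rs u (n + k) - rs u n) (u (n+k)%nat)). lra. Qed.

Lemma abs_growing u : Un_growing (rs (fun i => Rabs (u i))).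
Proof. intro n; simpl. pose proof (Rabs_pos (u n)); lra. Qed.

Lemma abs_conv_real u M : (forall n, rs (fun k => Rabs (u k)) n <= M) -> exists l, Un_cv (rs u) l.
Proof. intros HM.
 assert (Hub : has_ub (rs (fun k => Rabs (u k)))).
 { exists M. intros x [n Hn]; subst; apply HM. }
 destruct (growing_cv _ (abs_growing u) Hub) as [la Hla].
 assert (Hc := CV_Cauchy _ (exist _ la Hla)).
 assert (Cauchy_crit (rs u)).
 { intros eps He. destruct (Hc eps He) as [N HN]. exists N; intros n m Hn Hm.
   unfold R_dist. destruct (Compare_dec.le_lt_dec n m).
   - replace m with (n + (m - n))%nat by lia. rewrite Rabs_minus_sym.
     eapply Rle_lt_trans. apply rs_diff_abs.
     specialize (HN (n + (m-n))%nat n ltac:(lia) Hn). unfold R_dist in HN.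
     eapply Rle_lt_trans; [apply Rle_abs| exact HN].
   - replace n with (m + (n - m))%nat by lia.
     eapply Rle_lt_trans. apply rs_diff_abs.
     specialize (HN (m + (n-m))%nat m ltac:(lia) Hm). unfold R_dist in HN.
     eapply Rle_lt_trans; [apply Rle_abs| exact HN]. }
 destruct (R_complete _ H) as [l Hl]. exists l; exact Hl. Qed.

Lemma abs_conv f M : (forall n, rs (fun k => N1 (f k)) n <= M) -> exists l, CS f l.
Proof. intros HM.
 destruct (abs_conv_real (fun k => fst (f k)) M) as [l1 H1].
 { intro n. eapply Rle_trans; [|apply (HM n)]. apply rs_le; intros; unfold N1.
   pose proof (Rabs_pos (snd (f i))); lra. }
 destruct (abs_conv_real (fun k => snd (f k)) M) as [l2 H2].
 { intro n. eapply Rle_trans; [|apply (HM n)]. apply rs_le; intros; unfold N1.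
   pose proof (Rabs_pos (fst (f i))); lra. }
 exists (l1, l2). intros eps He.
 destruct (H1 (eps/2) ltac:(lra)) as [N1' HN1]. destruct (H2 (eps/2) ltac:(lra)) as [N2 HN2].
 exists (N1' + N2)%nat; intros n Hn.
 specialize (HN1 n ltac:(lia)). specialize (HN2 n ltac:(lia)). unfold R_dist in *.
 unfold N1, Csub, Cadd, Copp; simpl. rewrite Csum_fst, Csum_snd.
 unfold Rminus in *. lra. Qed.

Ltac cxr := apply Cx_eq; simpl; ring.

Definition cauchy (a b : nat -> Cx) (n : nat) : Cx :=
  Csum (fun k => Cmul (a k) (b (n - k)%nat)) (S n).

Lemma Csum_add f g n : Csum (fun i => Cadd (f i) (g i)) n = Cadd (Csum f n) (Csum g n).
Proof. induction n; simpl. cxr. rewrite IHn; cxr. Qed.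

Lemma cauchy_sum a b N :
  Csum (cauchy a b) N = Csum (fun i => Cmul (a i) (Csum b (N - i))) N.
Proof. induction N. reflexivity.
 simpl Csum at 1. rewrite IHN. unfold cauchy.
 change (Csum (fun k => Cmul (a k) (b (N - k)%nat)) (S N)) with
   (Cadd (Csum (fun k => Cmul (a k) (b (N - k)%nat)) N) (Cmul (a N) (b (N - N)%nat))).
 change (Csum (fun i => Cmul (a i) (Csum b (S N - i))) (S N)) with
  (Cadd (Csum (fun i => Cmul (a i) (Csum b (S N - i))) N) (Cmul (a N) (Csum b (S N - N)))).
 rewrite (Csum_ext (fun i => Cmul (a i) (Csum b (S N - i))) 
   (fun i => Cadd (Cmul (a i) (Csum b (N - i))) (Cmul (a i) (b (N - i)%nat)))).
 2:{ intros i Hi. replace (S N - i)%nat with (S (N - i)) by lia. simpl. cxr. }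
 rewrite Csum_add. replace (S N - N)%nat with 1%nat by lia. rewrite Nat.sub_diag. simpl. cxr.
Qed.

Lemma Csum_sub_mul a c B n :
  Csum (fun i => Cmul (a i) (Csub (c i) B)) n =
  Csub (Csum (fun i => Cmul (a i) (c i)) n) (Cmul (Csum a n) B).
Proof. induction n; simpl. cxr. rewrite IHn; cxr. Qed.

Lemma mertens a b A B Ma Mb :
  (forall n, rs (fun k => N1 (a k)) n <= Ma) ->
  (forall n, rs (fun k => N1 (b k)) n <= Mb) ->
  CS a A -> CS b B -> CS (cauchy a b) (Cmul A B).
Proof.
 intros HMa HMb HA HB.
 assert (Hub : has_ub (rs (fun k => N1 (a k)))).
 { exists Ma. intros x [n Hn]; subst; apply HMa. }
 assert (Hg : Un_growing (rs (fun k => N1 (a k)))).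
 { intro n; simpl; pose proof (N1_pos (a n)); lra. }
 destruct (growing_cv _ Hg Hub) as [la Hla].
 assert (Hle := growing_ineq _ _ Hg Hla).
 assert (Ma0 : 0 <= Ma) by (apply (HMa 0%nat)).
 assert (Mb0 : 0 <= Mb) by (apply (HMb 0%nat)).
 set (Kb := Mb + N1 B).
 assert (HKb : forall m, N1 (Csub (Csum b m) B) <= Kb).
 { intro m. eapply Rle_trans. apply N1_sub. pose proof (N1_Csum b m). pose proof (HMb m).
   unfold Kb; lra. }
 assert (NB0 := N1_pos B).
 set (K := Ma + Kb + N1 B + 1).
 assert (K0 : 0 < K) by (unfold K, Kb; lra).
 intros eps He. set (e := eps / K).
 assert (e0 : 0 < e) by (unfold e; apply Rdiv_lt_0_compat; lra).
 destruct (HB e e0) as [M1 HM1]. destruct (Hla e e0) as [M2 HM2].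
 destruct (HA e e0) as [M3 HM3].
 exists (M1 + M2 + M3)%nat. intros n Hn.
 assert (Hid : Csub (Csum (cauchy a b) n) (Cmul A B) =
   Cadd (Csum (fun i => Cmul (a i) (Csub (Csum b (n - i)) B)) n) (Cmul (Csub (Csum a n) A) B)).
 { rewrite Csum_sub_mul, cauchy_sum. cxr. }
 rewrite Hid. eapply Rle_lt_trans. apply N1_add.
 assert (H2 : N1 (Cmul (Csub (Csum a n) A) B) <= e * N1 B).
 { eapply Rle_trans. apply N1_mul. specialize (HM3 n ltac:(lia)). 
   apply Rmult_le_compat_r; lra. }
 assert (H1 : N1 (Csum (fun i => Cmul (a i) (Csub (Csum b (n - i)) B)) n) <= e * (Ma + Kb)).
 { eapply Rle_trans. apply N1_Csum.
   eapply Rle_trans. apply (rs_le _ (fun i => N1 (a i) * N1 (Csub (Csum b (n - i)) B))).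
   { intros; apply N1_mul. }
   set (s := (n - M1)%nat).
   pose proof (rs_split (fun i => N1 (a i) * N1 (Csub (Csum b (n - i)) B)) s M1) as Hsp.
   replace (s + M1)%nat with n in Hsp by (unfold s; lia). rewrite Hsp.
   assert (P1 : rs (fun i => N1 (a i) * N1 (Csub (Csum b (n - i)) B)) s <= e * Ma).
   { eapply Rle_trans. apply (rs_le _ (fun i => e * N1 (a i))).
     { intros i Hi. rewrite Rmult_comm. apply Rmult_le_compat_r. apply N1_pos.
       left; apply HM1. unfold s in Hi; lia. }
     rewrite rs_scal. apply Rmult_le_compat_l; [lra| apply HMa]. }
   assert (P2 : rs (fun i => N1 (a (s + i)%nat) * N1 (Csub (Csum b (n - (s + i))) B)) M1 <= Kb * e).
   { eapply Rle_trans. apply (rs_le _ (fun i => Kb * N1 (a (s + i)%nat))).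
     { intros i Hi. rewrite Rmult_comm. apply Rmult_le_compat_r. apply N1_pos. apply HKb. }
     rewrite rs_scal. apply Rmult_le_compat_l. unfold Kb; lra.
     pose proof (rs_split (fun k => N1 (a k)) s M1). simpl in H.
     pose proof (Hle (s + M1)%nat). specialize (HM2 s ltac:(unfold s; lia)). unfold R_dist in HM2.
     pose proof (Rle_abs (rs (fun k => N1 (a k)) s - la)). rewrite Rabs_minus_sym in HM2.
     pose proof (Rle_abs (la - rs (fun k => N1 (a k)) s)). lra. }
   lra. }
 assert (eps = e * K) by (unfold e; field; lra).
 unfold K in H. nra.
Qed.

Lemma geom_rs p k : rs (fun i => p ^ i) k * (1 - p) = 1 - p ^ k.
Proof. induction k; simpl. ring. rewrite Rmult_plus_distr_r, IHk; ring. Qed.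

Lemma geom_bound p k : 0 <= p < 1 -> rs (fun i => p ^ i) k <= / (1 - p).
Proof. intros Hp. pose proof (geom_rs p k). pose proof (pow_le p k (proj1 Hp)).
 apply (Rmult_le_reg_r (1 - p)). lra. rewrite H, Rinv_l by lra. lra. Qed.

Lemma ratio_bound c r L : (forall n, 0 < c n) -> 0 <= r -> 0 <= L -> L * r < 1 ->
 (forall eps, 0 < eps -> exists N, forall n, (N <= n)%nat -> c (S n) <= (L + eps) * c n) ->
 exists M, forall n, rs (fun k => c k * r ^ k) n <= M.
Proof.
 intros Hc Hr HL HLr Hrat.
 set (eps := (1 - L * r) / (2 * (r + 1))).
 assert (He : 0 < eps) by (unfold eps; apply Rdiv_lt_0_compat; lra).
 destruct (Hrat eps He) as [N HN].
 set (rho := (L + eps) * r).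
 assert (Hrho : 0 <= rho < 1).
 { split. unfold rho; nra.
   assert (eps * r < 1 - L * r).
   { unfold eps. apply (Rmult_lt_reg_r (2 * (r+1))). lra.
     replace ((1 - L * r) / (2 * (r + 1)) * r * (2 * (r + 1))) with ((1 - L*r) * r) by (field; lra).
     nra. }
   unfold rho; nra. }
 set (d := fun k => c k * r ^ k).
 assert (Hd0 : forall k, 0 <= d k).
 { intro k; unfold d. pose proof (Hc k); pose proof (pow_le r k Hr); nra. }
 assert (Hstep : forall n, (N <= n)%nat -> d (S n) <= rho * d n).
 { intros n Hn. unfold d, rho; simpl. pose proof (HN n Hn). pose proof (pow_le r n Hr).
   replace ((L + eps) * r * (c n * r ^ n)) with (((L + eps) * c n) * (r * r ^ n)) by ring.
   replace (c (S n) * (r * r ^ n)) with (c (S n) * (r * r^n)) by ring.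
   apply Rmult_le_compat_r. nra. lra. }
 assert (Hgeo : forall k, d (N + k)%nat <= rho ^ k * d N).
 { induction k. rewrite Nat.add_0_r; simpl; lra.
   rewrite Nat.add_succ_r. eapply Rle_trans. apply Hstep; lia. simpl.
   apply (Rmult_le_compat_l rho) in IHk; lra. }
 exists (rs d N + d N * / (1 - rho)). intro n.
 change (rs (fun k => c k * r ^ k) n) with (rs d n).
 destruct (Compare_dec.le_lt_dec n N).
 - pose proof (rs_mono d n N Hd0 l). pose proof (Hd0 N).
   assert (0 <= d N * / (1 - rho)). { apply Rmult_le_pos. lra. left; apply Rinv_0_lt_compat; lra. }
   lra.
 - replace n with (N + (n - N))%nat by lia. rewrite rs_split.
   assert (rs (fun i => d (N + i)%nat) (n - N) <= d N * / (1 - rho)).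
   { eapply Rle_trans. apply (rs_le _ (fun i => d N * rho ^ i)).
     intros; rewrite Rmult_comm; apply Hgeo.
     rewrite rs_scal. apply Rmult_le_compat_l. apply Hd0. apply geom_bound; auto. }
   lra.
Qed.

Section Q.
Variable q : R.
Hypothesis hq : 0 < q.

Lemma qint_nonneg n : 0 <= qint q n.
Proof. induction n; simpl. lra. pose proof (pow_le q n (Rlt_le _ _ hq)); lra. Qed.

Lemma qint_ge1 n : 1 <= qint q (S n).
Proof. induction n; simpl. lra. simpl in IHn. pose proof (pow_le q n (Rlt_le _ _ hq)).
 pose proof (pow_lt q n hq). nra. Qed.

Lemma qfact_pos n : 0 < qfact q n.
Proof. induction n; simpl. lra. pose proof (qint_ge1 n). simpl in H. nra. Qed.

Lemma qint_geom n : qint q n * (1 - q) = 1 - q ^ n.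
Proof. induction n; simpl. ring. rewrite Rmult_plus_distr_r, IHn; ring. Qed.

Lemma qint_add a b : qint q (a + b) = qint q a + q ^ a * qint q b.
Proof. induction b; simpl. rewrite Nat.add_0_r; ring. rewrite Nat.add_succ_r; simpl.
 rewrite IHb, pow_add; ring. Qed.

Lemma qint_ge_n (h1 : 1 <= q) n : INR n <= qint q n.
Proof. induction n. simpl; lra. rewrite S_INR. simpl qint. pose proof (pow_R1_Rle q n h1). lra. Qed.

Lemma qint_ge_le1 (h1 : q <= 1) n : INR (S n) * q ^ n <= qint q (S n).
Proof. induction n. simpl; right; ring.
 change (qint q (S (S n))) with (qint q (S n) + q ^ (S n)).
 rewrite S_INR. pose proof (pow_le q n (Rlt_le _ _ hq)). simpl pow. simpl pow in IHn.
 pose proof (pos_INR (S n)).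
 assert (INR (S n) * (q*q^n) <= INR (S n) * q^n) by (apply Rmult_le_compat_l; nra). lra. Qed.

End Q.

Definition tri (k : nat) : nat := (k * (k - 1) / 2)%nat.

Lemma tri_S k : tri (S k) = (tri k + k)%nat.
Proof. unfold tri. replace (S k * (S k - 1))%nat with (k * (k - 1) + k * 2)%nat.
 rewrite Nat.div_add by lia. reflexivity.
 destruct k. simpl; reflexivity. simpl. rewrite Nat.sub_0_r. nia. Qed.

Lemma tri_0 : tri 0 = 0%nat.
Proof. reflexivity. Qed.

Fixpoint qb (q : R) (n k : nat) : R :=
 match n, k with
 | _, O => 1
 | O, S _ => 0
 | S m, S j => q ^ (m - j) * qb q m j + qb q m (S j)
 end.

Fixpoint Px (q x : R) (n : nat) : R :=
  match n with O => 1 | S m => Px q x m * (1 + q ^ m * x) end.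

Lemma qb_0 q n : qb q n 0 = 1.
Proof. destruct n; reflexivity. Qed.

Lemma qb_over q n : forall k, (n < k)%nat -> qb q n k = 0.
Proof. induction n; intros k Hk; destruct k; try lia; simpl; auto.
 rewrite (IHn k) by lia. rewrite (IHn (S k)) by lia. ring. Qed.

Lemma qb_fact q n : forall k, (k <= n)%nat -> qb q n k * qfact q k * qfact q (n - k) = qfact q n.
Proof. induction n; intros k Hk.
 - destruct k; [simpl; ring | lia].
 - destruct k. rewrite Nat.sub_0_r. simpl; ring.
   assert (Hj : (k <= n)%nat) by lia.
   change (qb q (S n) (S k)) with (q ^ (n - k) * qb q n k + qb q n (S k)).
   replace (S n - S k)%nat with (n - k)%nat by lia.
   assert (H2 : qb q n (S k) * qfact q (S k) * qfact q (n - k) = qfact q n * qint q (n - k)).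
   { destruct (Nat.eq_dec k n).
     - subst. rewrite qb_over by lia. rewrite Nat.sub_diag. simpl; ring.
     - replace (n - k)%nat with (S (n - S k)) by lia.
       change (qfact q (S (n - S k))) with (qfact q (n - S k) * qint q (S (n - S k))).
       rewrite <- (IHn (S k)) by lia. ring. }
   pose proof (IHn k Hj) as H1.
   change (qfact q (S k)) with (qfact q k * qint q (S k)).
   change (qfact q (S n)) with (qfact q n * qint q (S n)).
   assert (Hq : qint q (S n) = qint q (n-k) + q^(n-k) * qint q (S k)) by (rewrite <- qint_add; f_equal; lia).
   rewrite Hq.
   change (qfact q (S k)) with (qfact q k * qint q (S k)) in H2.
   transitivity (q ^ (n - k) * qint q (S k) * (qb q n k * qfact q k * qfact q (n - k))
     + qb q n (S k) * (qfact q k * qint q (S k)) * qfact q (n - k)). ring.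
   rewrite H1, H2. ring.
Qed.

Lemma qbinom q x n : rs (fun k => q ^ (tri k) * x ^ k * qb q n k) (S n) = Px q x n.
Proof. induction n.
 - simpl. ring.
 - rewrite rs_shift. simpl qb at 1.
   rewrite (rs_ext (fun k => q ^ tri (S k) * x ^ S k * qb q (S n) (S k))
     (fun k => (q ^ n * x) * (q ^ tri k * x ^ k * qb q n k) + q ^ tri (S k) * x ^ S k * qb q n (S k))).
   2:{ intros i Hi. simpl qb. rewrite tri_S. rewrite !pow_add.
       replace (q ^ n) with (q ^ i * q ^ (n - i)).
       2:{ rewrite <- pow_add. f_equal. lia. } simpl. ring. }
   rewrite rs_plus, rs_scal, IHn.
   assert (E1 : 1 + rs (fun k => q ^ tri (S k) * x ^ S k * qb q n (S k)) (S n)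
             = rs (fun k => q ^ tri k * x ^ k * qb q n k) (S (S n))).
   { rewrite (rs_shift _ (S n)). rewrite qb_0, tri_0. simpl. ring. }
   rewrite tri_0.
   change (rs (fun k => q ^ tri k * x ^ k * qb q n k) (S (S n))) with
     (rs (fun k => q ^ tri k * x ^ k * qb q n k) (S n) + q ^ tri (S n) * x ^ (S n) * qb q n (S n)) in E1.
   rewrite IHn, (qb_over q n (S n)) in E1 by lia. simpl. simpl in E1. lra.
Qed.

Lemma Px_pos q n : 0 < q -> 0 < Px q 1 n.
Proof. intros hq; induction n; simpl. lra. pose proof (pow_lt q n hq). nra. Qed.

Lemma qbfact_Px q n : 0 < q -> qbfact q n * Px q 1 n = qfact q n * 2 ^ n.
Proof. intros hq; induction n. simpl; ring.
 simpl qbfact; simpl Px; simpl qfact. unfold qbrace. replace (S n - 1)%nat with n by lia.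
 pose proof (pow_lt q n hq).
 transitivity ((qbfact q n * Px q 1 n) * qint q (S n) * 2). field. lra.
 rewrite IHn. simpl; ring. Qed.

Lemma coef_id q n : 0 < q ->
  rs (fun k => q ^ (tri k) / qfact q k * / qfact q (n - k)) (S n) = Px q 1 n / qfact q n.
Proof. intros hq. rewrite <- (qbinom q 1 n).
 rewrite (rs_ext (fun k => q ^ (tri k) / qfact q k * / qfact q (n - k)) (fun k => / qfact q n * (q ^ tri k * 1 ^ k * qb q n k))).
 rewrite rs_scal; unfold Rdiv; ring.
 intros k Hk. rewrite pow1. pose proof (qb_fact q n k ltac:(lia)).
 pose proof (qfact_pos q hq k). pose proof (qfact_pos q hq (n - k)). pose proof (qfact_pos q hq n).
 assert (Hqb : qb q n k = qfact q n / (qfact q k * qfact q (n - k))).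
 { rewrite <- H. field. split; lra. }
 rewrite Hqb. field. repeat split; lra. Qed.

Lemma Cpow_add w a b : Cmul (Cpow w a) (Cpow w b) = Cpow w (a + b).
Proof. induction a; simpl. cxr. rewrite <- IHa. cxr. Qed.

Lemma Cpow_scal r z n : Cpow (Cscal r z) n = Cscal (r ^ n) (Cpow z n).
Proof. induction n; simpl. cxr. rewrite IHn. cxr. Qed.

Lemma Csum_scal (g : nat -> R) W m : Csum (fun k => Cscal (g k) W) m = Cscal (rs g m) W.
Proof. induction m; simpl. cxr. rewrite IHm. cxr. Qed.

Lemma cauchy_eq q z n : 0 < q ->
  cauchy (E_q_term q (Cscal (/2) z)) (e_q_term q (Cscal (/2) z)) n = Eimp_term q z n.
Proof. intros hq. unfold cauchy.
 set (w := Cscal (/2) z).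
 rewrite (Csum_ext _ (fun k => Cscal (q ^ (tri k) / qfact q k * / qfact q (n - k)) (Cpow w n))).
 2:{ intros k Hk. unfold E_q_term, e_q_term.
     replace (Cpow w n) with (Cmul (Cpow w k) (Cpow w (n - k))).
     2:{ rewrite Cpow_add. f_equal. lia. }
     unfold tri. cxr. }
 rewrite Csum_scal, coef_id by auto. unfold Eimp_term, w. rewrite Cpow_scal.
 pose proof (qbfact_Px q n hq). pose proof (Px_pos q n hq). pose proof (qfact_pos q hq n).
 pose proof (pow_lt 2 n ltac:(lra)).
 assert (Hb : qbfact q n = qfact q n * 2 ^ n / Px q 1 n) by (rewrite <- H; field; lra).
 rewrite Hb, pow_inv.
 apply Cx_eq; simpl; field; lra. Qed.

Lemma term_abs_bound (c : nat -> R) w M : (forall k, 0 < c k) ->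
  (forall n, rs (fun k => c k * Cnorm w ^ k) n <= M) ->
  forall n, rs (fun k => N1 (Cscal (c k) (Cpow w k))) n <= 2 * M.
Proof. intros Hc HM n. eapply Rle_trans.
 apply (rs_le _ (fun k => 2 * (c k * Cnorm w ^ k))).
 { intros i _. rewrite N1_scal, Rabs_right by (left; apply Hc).
   pose proof (N1_le_Cnorm (Cpow w i)). rewrite Cnorm_pow in H. pose proof (Hc i). nra. }
 rewrite rs_scal. pose proof (HM n). lra. Qed.

Lemma eventually_big A : exists N, forall n, (N <= n)%nat -> A < INR n.
Proof. destruct (INR_unbounded A) as [N HN]. exists N; intros n Hn.
 apply le_INR in Hn. lra. Qed.

Lemma ratio_e q L : 0 < q ->
  (forall eps, 0 < eps -> exists N, forall n, (N <= n)%nat -> 1 <= (L + eps) * qint q (S n)) ->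
  forall eps, 0 < eps -> exists N, forall n, (N <= n)%nat ->
    / qfact q (S n) <= (L + eps) * / qfact q n.
Proof. intros hq H eps He. destruct (H eps He) as [N HN]. exists N; intros n Hn.
 specialize (HN n Hn). pose proof (qfact_pos q hq n). pose proof (qint_ge1 q hq n).
 change (qfact q (S n)) with (qfact q n * qint q (S n)).
 apply (Rmult_le_reg_r (qfact q n * qint q (S n))). nra.
 replace (/ (qfact q n * qint q (S n)) * (qfact q n * qint q (S n))) with 1 by (field; lra).
 replace ((L + eps) * / qfact q n * (qfact q n * qint q (S n))) with ((L + eps) * qint q (S n)) by (field; lra).
 lra. Qed.

Lemma ratio_E q L : 0 < q ->
  (forall eps, 0 < eps -> exists N, forall n, (N <= n)%nat -> q ^ n <= (L + eps) * qint q (S n)) ->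
  forall eps, 0 < eps -> exists N, forall n, (N <= n)%nat ->
    q ^ tri (S n) / qfact q (S n) <= (L + eps) * (q ^ tri n / qfact q n).
Proof. intros hq H eps He. destruct (H eps He) as [N HN]. exists N; intros n Hn.
 specialize (HN n Hn). pose proof (qfact_pos q hq n). pose proof (qint_ge1 q hq n).
 pose proof (pow_lt q (tri n) hq).
 change (qfact q (S n)) with (qfact q n * qint q (S n)). rewrite tri_S, pow_add.
 apply (Rmult_le_reg_r (qfact q n * qint q (S n) / q ^ tri n)).
 apply Rdiv_lt_0_compat; nra.
 replace (q ^ tri n * q ^ n / (qfact q n * qint q (S n)) * (qfact q n * qint q (S n) / q ^ tri n)) with (q ^ n) by (field; repeat split; lra).
 replace ((L + eps) * (q ^ tri n / qfact q n) * (qfact q n * qint q (S n) / q ^ tri n)) with ((L + eps) * qint q (S n)) by (field; split; lra).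
 lra. Qed.

Lemma obl_e_lt1 q : 0 < q < 1 -> forall eps, 0 < eps -> exists N, forall n, (N <= n)%nat ->
  1 <= ((1 - q) + eps) * qint q (S n).
Proof. intros hq eps He. destruct (pow_lt_1_zero q ltac:(rewrite Rabs_right; lra) eps He) as [N HN].
 exists N; intros n Hn. specialize (HN (S n) ltac:(lia)).
 pose proof (qint_geom q (S n)). pose proof (qint_ge1 q (proj1 hq) n).
 pose proof (Rle_abs (q ^ S n)).
 assert (eps * 1 <= eps * qint q (S n)) by (apply Rmult_le_compat_l; lra). lra. Qed.

Lemma obl_e_ge1 q : 1 <= q -> forall eps, 0 < eps -> exists N, forall n, (N <= n)%nat ->
  1 <= (0 + eps) * qint q (S n).
Proof. intros hq eps He. destruct (eventually_big (/ eps)) as [N HN]. exists N; intros n Hn.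
 specialize (HN n Hn). pose proof (qint_ge_n q hq (S n)). rewrite S_INR in H.
 assert (eps * / eps < eps * INR n) by (apply Rmult_lt_compat_l; lra).
 rewrite Rinv_r in H0 by lra. pose proof (pos_INR n).
 assert (eps * (INR n + 1) <= eps * qint q (S n)) by (apply Rmult_le_compat_l; lra). nra. Qed.

Lemma obl_E_le1 q : 0 < q <= 1 -> forall eps, 0 < eps -> exists N, forall n, (N <= n)%nat ->
  q ^ n <= (0 + eps) * qint q (S n).
Proof. intros hq eps He. destruct (eventually_big (/ eps)) as [N HN]. exists N; intros n Hn.
 specialize (HN n Hn). pose proof (qint_ge_le1 q (proj1 hq) (proj2 hq) n). rewrite S_INR in H.
 assert (eps * / eps < eps * INR n) by (apply Rmult_lt_compat_l; lra).
 rewrite Rinv_r in H0 by lra. pose proof (pos_INR n). pose proof (pow_lt q n (proj1 hq)).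
 assert (eps * ((INR n + 1) * q ^ n) <= eps * qint q (S n)) by (apply Rmult_le_compat_l; lra).
 assert (q ^ n * 1 <= q ^ n * (eps * (INR n + 1))) by (apply Rmult_le_compat_l; lra).
 nra. Qed.

Lemma obl_E_gt1 q : 1 < q -> forall eps, 0 < eps -> exists N, forall n, (N <= n)%nat ->
  q ^ n <= ((q - 1) / q + eps) * qint q (S n).
Proof. intros hq eps He. destruct (eventually_big (/ (eps * q))) as [N HN]. exists N; intros n Hn.
 specialize (HN n Hn). pose proof (qint_ge_n q (Rlt_le _ _ hq) (S n)). rewrite S_INR in H.
 assert (Heq : 0 < eps * q) by nra.
 assert ((eps * q) * / (eps * q) < (eps * q) * INR n) by (apply Rmult_lt_compat_l; lra).
 rewrite Rinv_r in H0 by lra. pose proof (pos_INR n).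
 assert (eps * q * (INR n + 1) <= eps * q * qint q (S n)) by (apply Rmult_le_compat_l; lra).
 pose proof (qint_geom q (S n)). simpl pow in H3.
 apply (Rmult_le_reg_l q). lra.
 replace (q * (((q - 1) / q + eps) * qint q (S n))) with ((q - 1) * qint q (S n) + eps * q * qint q (S n)) by (field; lra).
 nra. Qed.

Lemma e_bound q w L : 0 < q -> 0 <= L -> L * Cnorm w < 1 ->
  (forall eps, 0 < eps -> exists N, forall n, (N <= n)%nat -> 1 <= (L + eps) * qint q (S n)) ->
  exists M, forall n, rs (fun k => N1 (e_q_term q w k)) n <= M.
Proof. intros hq HL HLr Hob.
 destruct (ratio_bound (fun k => / qfact q k) (Cnorm w) L) as [M HM]; auto.
 intro n; apply Rinv_0_lt_compat, qfact_pos, hq. apply Cnorm_pos.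
 apply ratio_e; auto.
 exists (2 * M). apply term_abs_bound; auto. intro; apply Rinv_0_lt_compat, qfact_pos, hq. Qed.

Lemma E_bound q w L : 0 < q -> 0 <= L -> L * Cnorm w < 1 ->
  (forall eps, 0 < eps -> exists N, forall n, (N <= n)%nat -> q ^ n <= (L + eps) * qint q (S n)) ->
  exists M, forall n, rs (fun k => N1 (E_q_term q w k)) n <= M.
Proof. intros hq HL HLr Hob.
 destruct (ratio_bound (fun k => q ^ tri k / qfact q k) (Cnorm w) L) as [M HM]; auto.
 intro n; apply Rdiv_lt_0_compat. apply pow_lt, hq. apply qfact_pos, hq. apply Cnorm_pos.
 apply ratio_E; auto.
 exists (2 * M). apply (term_abs_bound (fun k => q ^ tri k / qfact q k)); auto.
 intro n; apply Rdiv_lt_0_compat. apply pow_lt, hq. apply qfact_pos, hq. Qed.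

Theorem theorem1 (q : R) (hq : 0 < q) (z : Cx) (hz : in_disc q (Cnorm z)) :
  exists a b : Cx,
    Cseries (e_q_term q (Cscal (/ 2) z)) a /\
    Cseries (E_q_term q (Cscal (/ 2) z)) b /\
    Cseries (Eimp_term q z) (Cmul a b).
Proof.
 set (w := Cscal (/2) z).
 assert (Hw : Cnorm w = Cnorm z / 2).
 { unfold w. rewrite Cnorm_scal, Rabs_right by lra. unfold Rdiv; ring. }
 pose proof (Cnorm_pos z) as Hz0.
 assert (Hb : (exists M, forall n, rs (fun k => N1 (e_q_term q w k)) n <= M) /\
              (exists M, forall n, rs (fun k => N1 (E_q_term q w k)) n <= M)).
 { unfold in_disc in hz. destruct (Rlt_dec q 1) as [h1|h1].
   - split.
     + apply (e_bound q w (1 - q)); auto. lra.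
       rewrite Hw. apply (Rmult_lt_reg_r (2 / (1 - q))). apply Rdiv_lt_0_compat; lra.
       replace ((1 - q) * (Cnorm z / 2) * (2 / (1 - q))) with (Cnorm z) by (field; lra). lra.
       apply obl_e_lt1; lra.
     + apply (E_bound q w 0); auto. lra. lra. apply obl_E_le1; lra.
   - split.
     + apply (e_bound q w 0); auto. lra. lra. apply obl_e_ge1; lra.
     + destruct (Rlt_dec 1 q) as [h2|h2].
       * apply (E_bound q w ((q - 1) / q)); auto.
         left; apply Rdiv_lt_0_compat; lra.
         rewrite Hw. apply (Rmult_lt_reg_r (2 * q / (q - 1))). apply Rdiv_lt_0_compat; lra.
         replace ((q - 1) / q * (Cnorm z / 2) * (2 * q / (q - 1))) with (Cnorm z) by (field; lra). lra.
         apply obl_E_gt1; lra.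
       * apply (E_bound q w 0); auto. lra. lra. apply obl_E_le1; lra. }
 destruct Hb as [[Me HMe] [ME HME]].
 destruct (abs_conv _ _ HMe) as [a Ha]. destruct (abs_conv _ _ HME) as [b Hb].
 exists a, b. split; [|split]; try (apply CS_Cseries; assumption).
 apply CS_Cseries.
 pose proof (mertens _ _ _ _ _ _ HME HMe Hb Ha) as Hm.
 replace (Cmul a b) with (Cmul b a) by cxr.
 intros eps He. destruct (Hm eps He) as [N HN]. exists N; intros n Hn.
 rewrite <- (Csum_ext (cauchy (E_q_term q w) (e_q_term q w))).
 apply HN; auto. intros i _. apply cauchy_eq; auto.
Qed.
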